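(* Let $X_n$ be the value $m$ of an index occurrence $\underline m$ chosen uniformly at random among all index occurrences of a uniformly random plain $\lambda$-term of size $n$ (equivalently, the distribution with $\mathbb P(X_n=m)$ equal to the total number of occurrences of $\underline m$ over all plain terms of size $n$ divided by the total number of index occurrences over all plain terms of size $n$). Then for every $m\ge 0$, $\mathbb P(X_n=m)\to(1-\rho)\rho^m$ as $n\to\infty$, i.e. $X_n$ converges to a geometric law with parameter $\rho$.
   Context: Plain $\lambda$-terms in de Bruijn notation are generated by $T::=\underline{n}\mid \lambda T\mid (T\,T)$, with index $\underline n$ encoded as $\mathsf S^n\mathsf 0$. Size: $|\mathsf 0|=1$, $|\mathsf S\,\underline n|=|\underline n|+1$, $|M\,N|=|M|+|N|+1$, $|\lambda M|=|M|+1$. $\rho\approx 0.29559774$ is the positive real root of $z^3+z^2+3z-1$. *)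

(* Defs.v *)
From Stdlib Require Import Reals Arith List.
Import ListNotations.

(* T ::= n | lambda T | (T T); the index n stands for S^n 0. *)
Inductive term : Type :=
| Var : nat -> term
| Lam : term -> term
| App : term -> term -> term.

Fixpoint tsize (t : term) : nat :=
  match t with
  | Var n => S n
  | Lam u => S (tsize u)
  | App u v => S (tsize u + tsize v)
  end.

(* gen k n : all terms of size n, provided n <= k (fuel). *)
Fixpoint gen (k n : nat) : list term :=
  match k with
  | 0 => []
  | S k' =>
    match n with
    | 0 => []
    | S n' =>
        [Var n'] ++ map Lam (gen k' n') ++
        flat_map (fun i => flat_map (fun u => map (App u) (gen k' (n' - i)))
                                    (gen k' i))
                 (seq 0 (S n'))
    end
  end.

Definition terms_of_size (n : nat) : list term := gen n n.

Fixpoint occ (m : nat) (t : term) : nat :=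
  match t with
  | Var k => if Nat.eqb k m then 1 else 0
  | Lam u => occ m u
  | App u v => occ m u + occ m v
  end.

Fixpoint nvars (t : term) : nat :=
  match t with
  | Var _ => 1
  | Lam u => nvars u
  | App u v => nvars u + nvars v
  end.

Definition sumnat (f : term -> nat) (l : list term) : nat :=
  fold_right (fun t acc => f t + acc) 0 l.

Definition probX (n m : nat) : R :=
  INR (sumnat (occ m) (terms_of_size n)) / INR (sumnat nvars (terms_of_size n)).

(* Main.v *)
Require Import Defs.
From Stdlib Require Import Reals.
Open Scope R_scope.

From Stdlib Require Import Reals Lra Lia FunctionalExtensionality Ring Arith.
Open Scope R_scope.

Definition ser := nat -> R.
Definition conv (f g : ser) : ser := fun n => sum_f_R0 (fun k => f k * g (n - k)%nat) n.
Definition sadd (f g : ser) : ser := fun n => f n + g n.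
Definition sopp (f : ser) : ser := fun n => - f n.
Definition ssub (f g : ser) : ser := fun n => f n - g n.
Definition s0 : ser := fun _ => 0.
Definition s1 : ser := fun n => match n with O => 1 | _ => 0 end.
Definition sX : ser := fun n => match n with 1%nat => 1 | _ => 0 end.
Definition scal (c : R) : ser := fun n => match n with O => c | _ => 0 end.
Definition stl (f : ser) : ser := fun n => f (S n).

Lemma conv_0 f g : conv f g O = f O * g O.
Proof. unfold conv; simpl; ring. Qed.

Lemma conv_S f g n : conv f g (S n) = f O * g (S n) + conv (stl f) g n.
Proof.
  unfold conv. rewrite decomp_sum by lia. simpl. f_equal.
Qed.

Lemma conv_add_l f g h : conv (sadd f g) h = sadd (conv f h) (conv g h).
Proof.
  apply functional_extensionality; intro n; unfold conv, sadd.
  rewrite <- plus_sum. apply sum_eq; intros; ring.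
Qed.

Lemma conv_scl_l c f h n : conv (fun k => c * f k) h n = c * conv f h n.
Proof.
  unfold conv. rewrite scal_sum. apply sum_eq; intros; ring.
Qed.

Lemma conv_zero_l g : conv s0 g = s0.
Proof.
  apply functional_extensionality; intro n; unfold conv, s0.
  transitivity (sum_f_R0 (fun _ => 0) n). { apply sum_eq; intros; ring. }
  clear g; induction n; simpl; [ring|]. rewrite IHn; ring.
Qed.

Goal forall f g : nat -> R, f O * g 1%nat + g O * f 1%nat = g O * f 1%nat + g 1%nat * f O.
intros. ring. Qed.
Lemma conv_comm f g : conv f g = conv g f.
Proof.
  apply functional_extensionality; intro n.
  revert f g. induction n as [n IH] using (well_founded_induction Wf_nat.lt_wf). intros f g.
  destruct n as [|n]. { rewrite !conv_0; ring. }
  destruct n as [|n].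
  { rewrite !conv_S, !conv_0. unfold stl; simpl. ring. }
  rewrite (conv_S f g), (conv_S g f).
  rewrite (IH (S n) ltac:(lia) (stl f) g), (IH (S n) ltac:(lia) (stl g) f).
  rewrite (conv_S g (stl f)), (conv_S f (stl g)).
  rewrite (IH n ltac:(lia) (stl g) (stl f)). unfold stl. ring.
Qed.

Lemma tl_conv f g : stl (conv f g) = sadd (fun k => f O * stl g k) (conv (stl f) g).
Proof.
  apply functional_extensionality; intro n. unfold stl at 1, sadd.
  rewrite conv_S. reflexivity.
Qed.

Lemma conv_assoc f g h : conv f (conv g h) = conv (conv f g) h.
Proof.
  apply functional_extensionality; intro n. revert f.
  induction n; intro f.
  { rewrite !conv_0. ring. }
  rewrite (conv_S f), (conv_S (conv f g)), tl_conv, conv_add_l. unfold sadd.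
  rewrite conv_scl_l, IHn, conv_0, (conv_S g). ring.
Qed.

Lemma conv_1_l g : conv s1 g = g.
Proof.
  apply functional_extensionality; intro n. destruct n.
  - rewrite conv_0; simpl; ring.
  - rewrite conv_S. replace (stl s1) with s0 by (apply functional_extensionality; intros [|k]; reflexivity).
    rewrite conv_zero_l. unfold s0; simpl; ring.
Qed.

Lemma ser_ring : ring_theory s0 s1 sadd conv ssub sopp (@eq ser).
Proof.
  constructor; intros; try (apply functional_extensionality; intro; unfold sadd, ssub, sopp, s0; ring).
  - apply conv_1_l.
  - apply conv_comm.
  - apply conv_assoc.
  - apply conv_add_l.
Qed.

Add Ring serR : ser_ring.


Open Scope nat_scope.
From Stdlib Require Import Reals Lra Lia Arith List.
Import ListNotations.

Lemma flat_map_ext_in {A B} (f g : A -> list B) l :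
  (forall x, In x l -> f x = g x) -> flat_map f l = flat_map g l.
Proof.
  induction l; simpl; intros H; auto.
  rewrite H by auto. rewrite IHl; auto.
Qed.

Lemma gen_stable k : forall n, (n <= k)%nat -> gen (S k) n = gen k n.
Proof.
  induction k; intros n Hn.
  - assert (n = 0)%nat by lia; subst; reflexivity.
  - destruct n as [|n]; [reflexivity|].
    change (gen (S (S k)) (S n)) with
      ([Var n] ++ map Lam (gen (S k) n) ++
        flat_map (fun i => flat_map (fun u => map (App u) (gen (S k) (n - i)))
                                    (gen (S k) i)) (seq 0 (S n))).
    change (gen (S k) (S n)) with
      ([Var n] ++ map Lam (gen k n) ++
        flat_map (fun i => flat_map (fun u => map (App u) (gen k (n - i)))
                                    (gen k i)) (seq 0 (S n))).
    rewrite IHk by lia. f_equal. f_equal.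
    apply flat_map_ext_in; intros i Hi. apply in_seq in Hi.
    rewrite (IHk i) by lia.
    apply flat_map_ext_in; intros u _. rewrite (IHk (n - i)%nat) by lia. reflexivity.
Qed.

Lemma gen_fuel : forall d n, gen (n + d) n = gen n n.
Proof.
  induction d; intros n. { now rewrite Nat.add_0_r. }
  replace (n + S d)%nat with (S (n + d)) by lia.
  rewrite gen_stable by lia. apply IHd.
Qed.

Lemma gen_fuel' k n : (n <= k)%nat -> gen k n = gen n n.
Proof. intros H. replace k with (n + (k - n))%nat by lia. apply gen_fuel. Qed.

Definition lsum {A} (F : A -> nat) (l : list A) : nat :=
  fold_right (fun x acc => F x + acc) 0%nat l.

Lemma lsum_app {A} (F : A -> nat) l1 l2 : lsum F (l1 ++ l2) = (lsum F l1 + lsum F l2)%nat.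
Proof. induction l1; simpl; auto. rewrite IHl1; lia. Qed.

Lemma lsum_flat_map {A B} (F : B -> nat) (G : A -> list B) l :
  lsum F (flat_map G l) = lsum (fun x => lsum F (G x)) l.
Proof. induction l; simpl; auto. rewrite lsum_app, IHl; auto. Qed.

Lemma lsum_map {A B} (F : B -> nat) (G : A -> B) l : lsum F (map G l) = lsum (fun x => F (G x)) l.
Proof. induction l; simpl; auto. Qed.

Lemma lsum_ext_in {A} (F G : A -> nat) l : (forall x, In x l -> F x = G x) -> lsum F l = lsum G l.
Proof. induction l; simpl; intros H; auto. Qed.

Lemma lsum_affine {A} (F : A -> nat) c d l :
  lsum (fun x => c * F x + d)%nat l = (c * lsum F l + length l * d)%nat.
Proof. induction l; simpl; [lia| rewrite IHl; lia]. Qed.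

Lemma lsum_cplus {A} (F : A -> nat) c l :
  lsum (fun x => c + F x)%nat l = (length l * c + lsum F l)%nat.
Proof. induction l; simpl; [lia| rewrite IHl; lia]. Qed.

Lemma lsum_const {A} c (l : list A) : lsum (fun _ => c) l = (length l * c)%nat.
Proof. induction l; simpl; [lia| rewrite IHl; lia]. Qed.

Lemma length_lsum {A} (l : list A) : length l = lsum (fun _ => 1%nat) l.
Proof. induction l; simpl; auto. Qed.

Lemma sumnat_lsum f l : sumnat f l = lsum f l.
Proof. reflexivity. Qed.

Definition Ln n := length (terms_of_size n).
Definition Wn (f : term -> nat) n := sumnat f (terms_of_size n).

Lemma gen_S n : terms_of_size (S n) =
  [Var n] ++ map Lam (terms_of_size n) ++
  flat_map (fun i => flat_map (fun u => map (App u) (terms_of_size (n - i)))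
                              (terms_of_size i)) (seq 0 (S n)).
Proof.
  unfold terms_of_size at 1. change (gen (S n) (S n)) with
      ([Var n] ++ map Lam (gen n n) ++
        flat_map (fun i => flat_map (fun u => map (App u) (gen n (n - i)))
                                    (gen n i)) (seq 0 (S n))).
  f_equal. f_equal. apply flat_map_ext_in; intros i Hi. apply in_seq in Hi.
  unfold terms_of_size. rewrite (gen_fuel' n i) by lia.
  apply flat_map_ext_in; intros u _. rewrite gen_fuel' by lia. reflexivity.
Qed.

Lemma Wn_0 f : Wn f 0 = 0%nat.
Proof. reflexivity. Qed.

Lemma Wn_S f (HL : forall t, f (Lam t) = f t) (HA : forall t u, f (App t u) = (f t + f u)%nat) n :
  Wn f (S n) = (f (Var n) + Wn f n +
     lsum (fun i => Wn f i * Ln (n - i) + Ln i * Wn f (n - i)) (seq 0 (S n)))%nat.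
Proof.
  unfold Wn at 1. rewrite gen_S. rewrite sumnat_lsum, !lsum_app. simpl lsum at 1.
  rewrite lsum_map. rewrite (lsum_ext_in (fun x => f (Lam x)) f) by auto.
  rewrite lsum_flat_map. rewrite Nat.add_0_r, Nat.add_assoc. f_equal.
  apply lsum_ext_in; intros i _.
  rewrite lsum_flat_map.
  rewrite (lsum_ext_in _ (fun u => Ln (n - i) * f u + Wn f (n - i))%nat).
  - rewrite lsum_affine. unfold Wn, Ln. change (sumnat f (terms_of_size i)) with (lsum f (terms_of_size i)). lia.
  - intros u _. rewrite lsum_map. rewrite (lsum_ext_in _ (fun v => f u + f v)%nat) by auto.
    rewrite lsum_cplus. unfold Ln, Wn. change (sumnat f (terms_of_size (n - i))) with (lsum f (terms_of_size (n - i))). lia.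
Qed.

Lemma Ln_S n : Ln (S n) =
  (1 + Ln n + lsum (fun i => Ln i * Ln (n - i)) (seq 0 (S n)))%nat.
Proof.
  unfold Ln at 1. rewrite !length_lsum. rewrite gen_S, !lsum_app. simpl lsum at 1.
  rewrite lsum_map, lsum_flat_map. unfold Ln. rewrite Nat.add_assoc. f_equal.
  apply lsum_ext_in; intros i _. rewrite lsum_flat_map.
  rewrite (lsum_ext_in _ (fun u => lsum (fun _ => 1%nat) (terms_of_size (n - i)))%nat).
  - rewrite lsum_const. rewrite <- !length_lsum. lia.
  - intros u _. rewrite lsum_map. simpl. reflexivity.
Qed.

Lemma INR_lsum_seq F n : INR (lsum F (seq 0 (S n))) = sum_f_R0 (fun i => INR (F i)) n.
Proof.
  induction n. { simpl. rewrite Nat.add_0_r. reflexivity. }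
  rewrite seq_S, lsum_app, plus_INR, IHn. simpl. rewrite Nat.add_0_r. reflexivity.
Qed.

From Stdlib Require Import Reals Lra Lia Arith List FunctionalExtensionality Ring.
Open Scope R_scope.

Declare Scope ser_scope.
Delimit Scope ser_scope with S.
Infix "+" := sadd : ser_scope.
Infix "*" := conv : ser_scope.
Infix "-" := ssub : ser_scope.
Notation s2 := (sadd s1 s1).

Lemma cX0 f : conv sX f O = 0.
Proof. rewrite conv_0. simpl. ring. Qed.

Lemma tl_sX : stl sX = s1.
Proof. apply functional_extensionality; intros [|[|k]]; reflexivity. Qed.

Lemma cXS f n : conv sX f (S n) = f n.
Proof. rewrite conv_S, tl_sX, conv_1_l. simpl. ring. Qed.

Lemma cscal c f n : conv (scal c) f n = c * f n.
Proof.
  destruct n. { rewrite conv_0; reflexivity. }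
  rewrite conv_S. replace (stl (scal c)) with s0 by (apply functional_extensionality; intros k; reflexivity).
  rewrite conv_zero_l. unfold s0; simpl; ring.
Qed.

Lemma c1 f n : conv s1 f n = f n.
Proof. rewrite conv_1_l. reflexivity. Qed.

Definition Lr : ser := fun n => INR (Ln n).
Definition Wr f : ser := fun n => INR (Wn f n).
Definition Ur : ser := fun _ => 1.

Lemma conv_INR_lsum (F G : ser) (Fn Gn : nat -> nat) n :
  (forall k, F k = INR (Fn k)) -> (forall k, G k = INR (Gn k)) ->
  INR (lsum (fun i => Fn i * Gn (n - i))%nat (seq 0 (S n))) = conv F G n.
Proof.
  intros HF HG. rewrite INR_lsum_seq. unfold conv. apply sum_eq; intros.
  rewrite mult_INR, HF, HG; reflexivity.
Qed.

Lemma Lr_eq : Lr = (sX * Ur + sX * Lr + sX * (Lr * Lr))%S.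
Proof.
  apply functional_extensionality; intros [|n]; unfold sadd.
  - rewrite !cX0. unfold Lr. simpl. ring.
  - rewrite !cXS. unfold Lr at 1. rewrite Ln_S, !plus_INR.
    rewrite (conv_INR_lsum Lr Lr Ln Ln) by reflexivity. unfold Ur, Lr. simpl. ring.
Qed.

Definition Weq (w F : ser) := F = (sX * w + sX * F + (scal 2) * (sX * (Lr * F)))%S.

Lemma Weq_coef w F : Weq w F -> F O = 0 /\ forall n, F (S n) = w n + F n + 2 * conv Lr F n.
Proof.
  unfold Weq; intros H. split.
  - pose proof (equal_f H O) as H1. rewrite H1. unfold sadd. rewrite cscal, !cX0. ring.
  - intros n. pose proof (equal_f H (S n)) as H1. rewrite H1. unfold sadd. rewrite cscal, !cXS. ring.
Qed.

Lemma Weq_unique w F G : Weq w F -> Weq w G -> F = G.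
Proof.
  intros HF HG. apply Weq_coef in HF as [HF0 HFS]. apply Weq_coef in HG as [HG0 HGS].
  assert (forall n k, (k <= n)%nat -> F k = G k).
  { induction n; intros k Hk.
    - replace k with O by lia. rewrite HF0, HG0; reflexivity.
    - destruct (Nat.eq_dec k (S n)) as [->|]; [|apply IHn; lia].
      rewrite HFS, HGS, (IHn n) by lia. f_equal. f_equal. unfold conv.
      apply sum_eq; intros i Hi. rewrite (IHn (n - i)%nat) by lia. reflexivity. }
  apply functional_extensionality; intros n. apply (H n); lia.
Qed.

Lemma Wr_eq f (HL : forall t, f (Lam t) = f t) (HA : forall t u, f (App t u) = (f t + f u)%nat) :
  Weq (fun n => INR (f (Var n))) (Wr f).
Proof.
  unfold Weq. apply functional_extensionality; intros [|n]; unfold sadd.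
  - rewrite cscal, !cX0. unfold Wr. simpl. ring.
  - rewrite cscal, !cXS. unfold Wr at 1. rewrite Wn_S by assumption. rewrite !plus_INR.
    rewrite INR_lsum_seq.
    transitivity (INR (f (Var n)) + Wr f n + (conv (Wr f) Lr n + conv Lr (Wr f) n)).
    { f_equal. unfold conv. rewrite <- plus_sum. apply sum_eq; intros.
      rewrite plus_INR, !mult_INR. reflexivity. }
    rewrite (conv_comm (Wr f) Lr). ring.
Qed.

Fixpoint Xp (m : nat) : ser := match m with O => s1 | S m' => conv sX (Xp m') end.

Lemma Xp_coef m n : Xp m n = if Nat.eqb n m then 1 else 0.
Proof.
  revert n; induction m; intros n.
  - destruct n; reflexivity.
  - simpl Xp. destruct n. { rewrite cX0. reflexivity. }
    rewrite cXS, IHm. reflexivity.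
Qed.

Definition C0 := Wr (occ 0).

Lemma occ_eq m : Weq (Xp m) (Wr (occ m)).
Proof.
  replace (Xp m) with (fun n => INR (occ m (Var n))).
  - apply Wr_eq; intros; reflexivity.
  - apply functional_extensionality; intros n. rewrite Xp_coef. simpl.
    destruct (Nat.eqb n m); reflexivity.
Qed.

Lemma nvars_eq : Weq Ur (Wr nvars).
Proof.
  replace Ur with (fun n => INR (nvars (Var n))) by reflexivity.
  apply Wr_eq; intros; reflexivity.
Qed.

Lemma Cm_eq m : Wr (occ m) = conv (Xp m) C0.
Proof.
  apply (Weq_unique (Xp m)). { apply occ_eq. }
  pose proof (occ_eq 0) as H. unfold Weq in *. fold C0 in H.
  transitivity (conv (Xp m) (sX * Xp 0 + sX * C0 + scal 2 * (sX * (Lr * C0)))%S).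
  { f_equal; exact H. }
  simpl Xp. ring.
Qed.

Lemma V_eq : Wr nvars = conv Ur C0.
Proof.
  apply (Weq_unique Ur). { apply nvars_eq. }
  pose proof (occ_eq 0) as H. unfold Weq in *. fold C0 in H.
  transitivity (conv Ur (sX * Xp 0 + sX * C0 + scal 2 * (sX * (Lr * C0)))%S).
  { f_equal; exact H. }
  simpl Xp. ring.
Qed.

From Stdlib Require Import Reals Lra Lia Arith List FunctionalExtensionality Ring.
Open Scope R_scope.
Local Open Scope ser_scope.

Lemma zero_sub (a b : ser) : a - b = s0 -> a = b.
Proof. intros H. transitivity ((a - b) + b); [ring|]. rewrite H. ring. Qed.
Lemma sub_zero (a b : ser) : a = b -> a - b = s0.
Proof. intros ->. ring. Qed.

Lemma C0_0 : C0 O = 0%R.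
Proof. apply (Weq_coef _ _ (occ_eq 0)). Qed.

Definition Aser := stl C0.

Lemma X_stl f : f O = 0%R -> conv sX (stl f) = f.
Proof.
  intros H. apply functional_extensionality; intros [|n].
  - rewrite cX0, H; reflexivity.
  - rewrite cXS; reflexivity.
Qed.

Lemma X_cancel F G : conv sX F = conv sX G -> F = G.
Proof.
  intros H. apply functional_extensionality; intros n.
  pose proof (equal_f H (S n)) as H1. rewrite !cXS in H1. exact H1.
Qed.

Lemma scal_add (a b : R) : scal (a + b)%R = scal a + scal b.
Proof. apply functional_extensionality; intros [|n]; unfold sadd; simpl; ring. Qed.
Lemma scal_mul (a b : R) : scal (a * b)%R = scal a * scal b.
Proof. apply functional_extensionality; intros n. rewrite cscal. destruct n; simpl; ring_simplify; reflexivity. Qed.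
Lemma scal_1 : scal 1 = s1.
Proof. reflexivity. Qed.
Lemma scal_2 : scal 2 = s2.
Proof. replace 2%R with (1 + 1)%R by ring. rewrite scal_add. reflexivity. Qed.

Lemma A_eq : Aser = s1 + sX * Aser + s2 * (sX * (Lr * Aser)).
Proof.
  apply X_cancel. pose proof (occ_eq 0) as H. unfold Weq in H. fold C0 in H.
  rewrite scal_2 in H. simpl Xp in H.
  unfold Aser. pose proof (X_stl C0 C0_0) as E. rewrite <- E in H.
  set (a := stl C0) in *. apply zero_sub.
  transitivity (sX * a - (sX * s1 + sX * (sX * a) + s2 * (sX * (Lr * (sX * a))))); [ring|].
  apply sub_zero. exact H.
Qed.

Lemma XU : sX * Ur = Ur - s1.
Proof.
  apply functional_extensionality; intros [|n]; unfold ssub.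
  - rewrite cX0. unfold Ur; simpl; ring.
  - rewrite cXS. unfold Ur; simpl; ring.
Qed.

Definition Dser := s1 - sX - s2 * (sX * Lr).
Definition Pser := (s1 - sX) * (s1 - sX) * (s1 - sX) - (s2 + s2) * (sX * sX).

Lemma AD : Aser * Dser = s1.
Proof.
  apply zero_sub. unfold Dser.
  transitivity (Aser - (s1 + sX * Aser + s2 * (sX * (Lr * Aser)))); [ring|].
  apply sub_zero. apply A_eq.
Qed.

Lemma AAP : Aser * Aser * Pser = s1 - sX.
Proof.
  apply zero_sub.
  pose proof (sub_zero _ _ AD) as z1.
  pose proof (sub_zero _ _ Lr_eq) as z2.
  pose proof (sub_zero _ _ XU) as z3.
  transitivity ((s1 - sX) * (Aser * Dser - s1) * (Aser * Dser + s1) +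
     Aser * Aser * ((s2 + s2) * sX * (s1 - sX) * (Lr - (sX * Ur + sX * Lr + sX * (Lr * Lr)))
                    - (s2 + s2) * sX * sX * (sX * Ur - (Ur - s1)))).
  { unfold Dser, Pser. ring. }
  rewrite z1, z2, z3. ring.
Qed.

Definition rs (r : R) (f : ser) : ser := fun n => (r ^ n * f n)%R.

Lemma rs_conv r f g : rs r (f * g) = rs r f * rs r g.
Proof.
  apply functional_extensionality; intros n. unfold conv, rs. rewrite scal_sum.
  apply sum_eq; intros i Hi.
  replace (r ^ n)%R with (r ^ i * r ^ (n - i))%R by (rewrite <- pow_add; f_equal; lia). ring.
Qed.
Lemma rs_add r f g : rs r (f + g) = rs r f + rs r g.
Proof. apply functional_extensionality; intros n. unfold rs, sadd. ring. Qed.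
Lemma rs_sub r f g : rs r (f - g) = rs r f - rs r g.
Proof. apply functional_extensionality; intros n. unfold rs, ssub. ring. Qed.
Lemma rs_s1 r : rs r s1 = s1.
Proof. apply functional_extensionality; intros [|n]; unfold rs; simpl; ring. Qed.
Lemma rs_sX r : rs r sX = scal r * sX.
Proof.
  apply functional_extensionality; intros n. rewrite cscal. unfold rs.
  destruct n as [|[|n]]; simpl; ring.
Qed.

Definition Qt (rho : R) : ser := s1 + scal (rho ^ 2 + rho ^ 3)%R * sX + scal (rho ^ 3)%R * (sX * sX).

Lemma rsP (rho : R) : (rho ^ 3 + rho ^ 2 + 3 * rho - 1 = 0)%R ->
  rs rho Pser = (s1 - sX) * Qt rho.
Proof.
  intros Hc. unfold Pser, Qt.
  repeat first [rewrite rs_sub | rewrite rs_conv | rewrite rs_add | rewrite rs_s1 | rewrite rs_sX].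
  replace (rho ^ 2 + rho ^ 3)%R with (rho * rho + rho * rho * rho)%R by ring.
  replace (rho ^ 3)%R with (rho * rho * rho)%R by ring.
  rewrite scal_add, !scal_mul.
  assert (Hs : scal (rho * rho * rho + rho * rho + (1 + 1 + 1) * rho - 1)%R = s0).
  { replace (rho * rho * rho + rho * rho + (1 + 1 + 1) * rho - 1)%R with 0%R by (rewrite <- Hc; ring).
    apply functional_extensionality; intros [|n]; reflexivity. }
  replace (rho * rho * rho + rho * rho + (1 + 1 + 1) * rho - 1)%R
    with (rho * rho * rho + rho * rho + (1 + 1 + 1) * rho + (-1) * 1)%R in Hs by ring.
  repeat first [rewrite scal_add in Hs | rewrite scal_mul in Hs | rewrite scal_1 in Hs].
  assert (Hm1 : scal (-1) = s0 - s1).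
  { apply functional_extensionality; intros [|n]; unfold ssub, s0, s1, scal; simpl; ring. }
  rewrite Hm1 in Hs. set (r := scal rho) in *.
  apply zero_sub.
  transitivity (s0 - sX * (r * r * r + r * r + (s1 + s1 + s1) * r + (s0 - s1) * s1)); [ring|].
  rewrite Hs. ring.
Qed.

Lemma uuQ (rho : R) : (rho ^ 3 + rho ^ 2 + 3 * rho - 1 = 0)%R ->
  rs rho Aser * rs rho Aser * ((s1 - sX) * Qt rho) = s1 - scal rho * sX.
Proof.
  intros Hc. rewrite <- rsP by exact Hc. rewrite <- !rs_conv, AAP, rs_sub, rs_s1, rs_sX.
  reflexivity.
Qed.

(* the coefficients of (1 - w)^(-1/2) *)
Fixpoint bb (n : nat) : R :=
  match n with O => 1%R | S k => (bb k * (2 * INR k + 1) / (2 * INR k + 2))%R end.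

Definition NE (f : ser) : ser := fun n => (INR n * f n)%R.

Lemma NE_add f g : NE (f + g) = NE f + NE g.
Proof. apply functional_extensionality; intros n; unfold NE, sadd; ring. Qed.
Lemma NE_sub f g : NE (f - g) = NE f - NE g.
Proof. apply functional_extensionality; intros n; unfold NE, ssub; ring. Qed.
Lemma NE_s1 : NE s1 = s0.
Proof. apply functional_extensionality; intros [|n]; unfold NE, s0; simpl; ring. Qed.
Lemma NE_sX : NE sX = sX.
Proof. apply functional_extensionality; intros [|[|n]]; unfold NE; simpl; ring. Qed.
Lemma NE_conv f g : NE (f * g) = NE f * g + f * NE g.
Proof.
  apply functional_extensionality; intros n. unfold NE, sadd, conv.
  rewrite scal_sum, <- plus_sum. apply sum_eq; intros i Hi.
  rewrite minus_INR by exact Hi. ring.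
Qed.

Lemma bb_rec n : (INR (S n) * bb (S n) = INR n * bb n + bb n / 2)%R.
Proof.
  simpl bb. rewrite S_INR. field. pose proof (pos_INR n). lra.
Qed.

Lemma B_eq : (s1 - sX) * NE bb + (s1 - sX) * NE bb = sX * bb.
Proof.
  assert (E : forall F : ser, (s1 - sX) * F = F - sX * F) by (intros; ring).
  rewrite E. apply functional_extensionality; intros [|n]; unfold sadd, ssub.
  - rewrite !cX0. unfold NE; simpl; ring.
  - rewrite !cXS. unfold NE. pose proof (bb_rec n). lra.
Qed.

Lemma BB : bb * bb * (s1 - sX) = s1.
Proof.
  assert (H : NE (bb * bb * (s1 - sX)) = s0).
  { rewrite !NE_conv, NE_sub, NE_s1, NE_sX.
    apply zero_sub.
    transitivity (bb * ((s1 - sX) * NE bb + (s1 - sX) * NE bb - sX * bb)); [ring|].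
    rewrite B_eq. ring. }
  apply functional_extensionality; intros [|n].
  - rewrite conv_0, conv_0. unfold ssub, s1, sX. simpl. ring.
  - pose proof (equal_f H (S n)) as H1. unfold NE, s0 in H1.
    unfold s1. apply Rmult_integral in H1 as [H1|H1]; auto.
    exfalso. apply (not_0_INR (S n)); auto.
Qed.

Definition Hser (rho : R) := rs rho Aser * ((s1 - sX) * bb).
Definition Gser (rho : R) := Hser rho * Hser rho.

Lemma u_HB rho : rs rho Aser = Hser rho * bb.
Proof.
  unfold Hser. transitivity (rs rho Aser * (bb * bb * (s1 - sX))).
  { rewrite BB. ring. }
  ring.
Qed.

Lemma GQ rho : (rho ^ 3 + rho ^ 2 + 3 * rho - 1 = 0)%R ->
  Gser rho * Qt rho = s1 - scal rho * sX.
Proof.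
  intros Hc. rewrite <- (uuQ rho Hc). unfold Gser, Hser.
  transitivity (rs rho Aser * rs rho Aser * ((s1 - sX) * Qt rho) * (bb * bb * (s1 - sX))); [ring|].
  rewrite BB. ring.
Qed.

Close Scope ser_scope.

From Stdlib Require Import Reals Lra Lia Arith List FunctionalExtensionality Ring.
Open Scope R_scope.

Lemma rho_bounds rho : 0 < rho -> rho ^ 3 + rho ^ 2 + 3 * rho - 1 = 0 ->
  2955/10000 < rho < 2957/10000.
Proof.
  intros H0 Hc. split.
  - destruct (Rlt_or_le (2955/10000) rho) as [H|H]; auto. exfalso.
    assert (rho ^ 3 + rho ^ 2 + 3 * rho - 1 < 0); [|lra].
    assert (rho ^ 3 <= (2955/10000)^3) by (apply pow_incr; lra).
    assert (rho ^ 2 <= (2955/10000)^2) by (apply pow_incr; lra). lra.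
  - destruct (Rlt_or_le rho (2957/10000)) as [H|H]; auto. exfalso.
    assert (rho ^ 3 + rho ^ 2 + 3 * rho - 1 > 0); [|lra].
    assert ((2957/10000)^3 <= rho ^ 3) by (apply pow_incr; lra).
    assert ((2957/10000)^2 <= rho ^ 2) by (apply pow_incr; lra). lra.
Qed.

Lemma GQ_expand rho : (Gser rho * Qt rho)%S =
  (Gser rho + scal (rho ^ 2 + rho ^ 3) * (sX * Gser rho) + scal (rho ^ 3) * (sX * (sX * Gser rho)))%S.
Proof. unfold Qt. ring. Qed.

Lemma G_coefs rho : rho ^ 3 + rho ^ 2 + 3 * rho - 1 = 0 ->
  Gser rho O = 1 /\ Gser rho 1%nat + (rho ^ 2 + rho ^ 3) * Gser rho O = - rho /\
  forall n, Gser rho (S (S n)) + (rho ^ 2 + rho ^ 3) * Gser rho (S n) + rho ^ 3 * Gser rho n = 0.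
Proof.
  intros Hc. pose proof (GQ rho Hc) as H. rewrite GQ_expand in H.
  split; [|split].
  - pose proof (equal_f H O) as H1. unfold sadd, ssub in H1.
    rewrite !cscal, !cX0 in H1. simpl in H1. lra.
  - pose proof (equal_f H 1%nat) as H1. unfold sadd, ssub in H1.
    rewrite !cscal, !cXS, !cX0 in H1. simpl in H1. lra.
  - intros n. pose proof (equal_f H (S (S n))) as H1. unfold sadd, ssub in H1.
    rewrite !cscal, !cXS in H1. simpl in H1. lra.
Qed.

Lemma C0_1 : C0 1%nat = 1.
Proof.
  destruct (Weq_coef _ _ (occ_eq 0)) as [H0 HS]. fold C0 in H0, HS.
  rewrite HS, H0. unfold conv. simpl. rewrite H0. simpl. ring.
Qed.

Lemma H0_is_1 rho : Hser rho O = 1.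
Proof.
  unfold Hser. rewrite !conv_0. unfold rs, Aser, stl. rewrite C0_1.
  unfold ssub, s1, sX. simpl. ring.
Qed.

Lemma G_bound rho : 0 < rho -> rho ^ 3 + rho ^ 2 + 3 * rho - 1 = 0 ->
  forall n, Rabs (Gser rho n) <= 18/10 * (23/100) ^ n.
Proof.
  intros H0 Hc. destruct (rho_bounds rho H0 Hc) as [Hl Hu].
  destruct (G_coefs rho Hc) as [G0 [G1 GS]]. rewrite G0 in G1.
  assert (Ha : 0 <= rho ^ 2 + rho ^ 3 <= 1133/10000).
  { split. { apply Rplus_le_le_0_compat; apply pow_le; lra. }
    assert (rho ^ 2 <= (2957/10000)^2) by (apply pow_incr; lra).
    assert (rho ^ 3 <= (2957/10000)^3) by (apply pow_incr; lra). lra. }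
  assert (Hb : 0 <= rho ^ 3 <= 259/10000).
  { split. { apply pow_le; lra. }
    assert (rho ^ 3 <= (2957/10000)^3) by (apply pow_incr; lra). lra. }
  assert (forall n, Rabs (Gser rho n) <= 18/10 * (23/100) ^ n /\
                    Rabs (Gser rho (S n)) <= 18/10 * (23/100) ^ (S n)).
  { induction n as [|n [IH1 IH2]].
    - rewrite G0. simpl. split; [rewrite Rabs_R1; lra|].
      replace (Gser rho 1%nat) with (- rho - (rho ^ 2 + rho ^ 3) * 1) by lra.
      rewrite Rabs_left by lra. lra.
    - split; [exact IH2|].
      replace (Gser rho (S (S n))) with
        (- ((rho ^ 2 + rho ^ 3) * Gser rho (S n)) - rho ^ 3 * Gser rho n) by (specialize (GS n); lra).
      eapply Rle_trans; [apply Rabs_triang|]. rewrite !Rabs_Ropp, !Rabs_mult.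
      rewrite (Rabs_right (rho ^ 2 + rho ^ 3)) by lra. rewrite (Rabs_right (rho ^ 3)) by lra.
      assert (Hp : 0 <= (23/100) ^ n) by (apply pow_le; lra).
      simpl pow in *.
      assert ((rho ^ 2 + rho ^ 3) * Rabs (Gser rho (S n)) <= 1133/10000 * (18 / 10 * (23 / 100 * (23 / 100) ^ n))).
      { apply Rmult_le_compat; try lra; apply Rabs_pos. }
      assert (rho * (rho * (rho * 1)) * Rabs (Gser rho n) <= 259/10000 * (18 / 10 * (23 / 100) ^ n)).
      { apply Rmult_le_compat; try lra; try apply Rabs_pos. }
      simpl in Ha. lra. }
  intros n; apply H.
Qed.

From Stdlib Require Import Reals Lra Lia Arith List FunctionalExtensionality Ring.
Open Scope R_scope.

Lemma conv_Ur_sum F N : conv Ur F N = sum_f_R0 F N.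
Proof. rewrite conv_comm. unfold conv, Ur. apply sum_eq; intros; ring. Qed.

Lemma sum_mono p (Hp : forall k, 0 <= p k) j N : (j <= N)%nat -> sum_f_R0 p j <= sum_f_R0 p N.
Proof.
  intros H. induction N.
  - replace j with O by lia. lra.
  - destruct (Nat.eq_dec j (S N)) as [->|]; [lra|].
    simpl. specialize (Hp (S N)). assert (sum_f_R0 p j <= sum_f_R0 p N) by (apply IHN; lia). lra.
Qed.

Lemma sum_nonneg p (Hp : forall k, 0 <= p k) N : 0 <= sum_f_R0 p N.
Proof. apply cond_pos_sum; auto. Qed.

Lemma conv_sq p (Hp : forall k, 0 <= p k) N :
  sum_f_R0 (conv p p) N <= (sum_f_R0 p N) ^ 2.
Proof.
  rewrite <- conv_Ur_sum, conv_assoc.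
  unfold conv at 1.
  apply Rle_trans with (sum_f_R0 (fun k => p (N - k)%nat * sum_f_R0 p N) N).
  - apply sum_Rle; intros k Hk. rewrite (Rmult_comm (p (N - k)%nat)). apply Rmult_le_compat_r; [apply Hp|].
    rewrite conv_Ur_sum. apply sum_mono; auto.
  - rewrite <- scal_sum. simpl. rewrite Rmult_1_r. apply Rmult_le_compat_l.
    { apply sum_nonneg; auto. }
    right. rewrite <- (conv_Ur_sum p N). unfold conv, Ur. apply sum_eq; intros; ring.
Qed.

Lemma T_lemma (p gam : nat -> R) (Hp : forall k, 0 <= p k)
  (H0 : 2 * p O <= gam O) (HS : forall n, 2 * p (S n) <= gam (S n) + conv p p n)
  (Hg : forall N, sum_f_R0 gam N <= 1) : forall N, sum_f_R0 p N <= 1.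
Proof.
  assert (Hk : forall N, 2 * sum_f_R0 p (S N) <= sum_f_R0 gam (S N) + sum_f_R0 (conv p p) N).
  { induction N.
    - simpl. specialize (HS O). lra.
    - change (sum_f_R0 p (S (S N))) with (sum_f_R0 p (S N) + p (S (S N))).
      change (sum_f_R0 gam (S (S N))) with (sum_f_R0 gam (S N) + gam (S (S N))).
      change (sum_f_R0 (conv p p) (S N)) with (sum_f_R0 (conv p p) N + conv p p (S N)).
      specialize (HS (S N)). lra. }
  induction N.
  - simpl. specialize (Hg O). simpl in Hg. lra.
  - specialize (Hk N). specialize (Hg (S N)). pose proof (conv_sq p Hp N).
    pose proof (sum_nonneg p Hp N).
    assert ((sum_f_R0 p N) ^ 2 <= 1) by (simpl; nra). lra.
Qed.

Lemma rabs_sum_le F N : Rabs (sum_f_R0 F N) <= sum_f_R0 (fun k => Rabs (F k)) N.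
Proof. apply sum_f_R0_triangle. Qed.

Lemma H_bound rho : 0 < rho -> rho ^ 3 + rho ^ 2 + 3 * rho - 1 = 0 ->
  forall n, Rabs (Hser rho n) <= (2/3) ^ n.
Proof.
  intros H0 Hc.
  set (h := Hser rho). set (g := Gser rho).
  assert (Hh0 : h O = 1) by apply H0_is_1.
  assert (Hg : forall n, g n = conv h h n) by reflexivity.
  set (q := fun k => Rabs (h (S k))).
  set (p := fun k => (3/2) ^ (S k) * q k).
  set (gam := fun k => (3/2) ^ (S k) * Rabs (g (S k))).
  assert (Hq : forall k, 0 <= q k) by (intros; apply Rabs_pos).
  assert (Hp : forall k, 0 <= p k).
  { intros k. unfold p. apply Rmult_le_pos; [apply pow_le; lra| apply Hq]. }
  assert (Hpp : forall n, (3/2) ^ (S (S n)) * conv q q n = conv p p n).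
  { intros n. unfold conv, p. rewrite scal_sum. apply sum_eq; intros i Hi.
    replace ((3/2) ^ (S (S n))) with ((3/2) ^ (S i) * (3/2) ^ (S (n - i)))
      by (rewrite <- pow_add; f_equal; lia). ring. }
  assert (Hg1 : g 1%nat = 2 * h 1%nat).
  { rewrite Hg, conv_S, conv_comm, conv_0. unfold stl. rewrite Hh0. ring. }
  assert (HgS : forall n, g (S (S n)) = 2 * h (S (S n)) + conv (stl h) (stl h) n).
  { intros n. rewrite Hg, conv_S, conv_comm, conv_S. change (stl h (S n)) with (h (S (S n))). rewrite Hh0. ring. }
  assert (HT : forall N, sum_f_R0 p N <= 1).
  { apply (T_lemma p gam Hp).
    - unfold p, gam, q. rewrite Hg1, Rabs_mult, (Rabs_right 2) by lra. simpl. lra.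
    - intros n. unfold gam. rewrite <- Hpp.
      assert (E : h (S (S n)) = (g (S (S n)) - conv (stl h) (stl h) n) / 2) by (rewrite HgS; field).
      unfold p, q at 1. rewrite E.
      assert (Rabs (conv (stl h) (stl h) n) <= conv q q n).
      { unfold conv. eapply Rle_trans; [apply rabs_sum_le|]. right. apply sum_eq; intros.
        rewrite Rabs_mult. reflexivity. }
      assert (Rabs ((g (S (S n)) - conv (stl h) (stl h) n) / 2) <=
              (Rabs (g (S (S n))) + conv q q n) / 2).
      { unfold Rdiv. rewrite Rabs_mult, (Rabs_right (/2)) by lra.
        apply Rmult_le_compat_r; [lra|]. unfold Rminus. eapply Rle_trans; [apply Rabs_triang|].
        rewrite Rabs_Ropp. lra. }
      assert (0 < (3/2) ^ (S (S n))) by (apply pow_lt; lra). nra.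
    - intros N. apply Rle_trans with (sum_f_R0 (fun k => (69/200) ^ k * (18/10 * (69/200))) N).
      + apply sum_Rle; intros k _. unfold gam.
        pose proof (G_bound rho H0 Hc (S k)) as HB. fold g in HB.
        replace ((69 / 200) ^ k * (18 / 10 * (69 / 200))) with
          ((3/2) ^ (S k) * (18 / 10 * (23 / 100) ^ (S k))).
        * apply Rmult_le_compat_l; [apply pow_le; lra| exact HB].
        * simpl. replace (69/200) with (3/2 * (23/100)) by field. rewrite Rpow_mult_distr. ring.
      + rewrite <- scal_sum, tech3 by lra.
        assert (0 < (69/200) ^ (S N)) by (apply pow_lt; lra).
        apply Rle_trans with (18 / 10 * (69 / 200) * (1 / (1 - 69/200))); [|lra].
        apply Rmult_le_compat_l; [lra|]. unfold Rdiv. apply Rmult_le_compat_r; [apply Rlt_le, Rinv_0_lt_compat; lra| lra]. }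
  intros [|n]. { rewrite Hh0, Rabs_R1. simpl. lra. }
  pose proof (HT n) as Hn. pose proof (sum_mono p Hp n n (le_n n)).
  assert (p n <= 1).
  { destruct n. { simpl in Hn. lra. }
    simpl in Hn. pose proof (sum_nonneg p Hp n). lra. }
  unfold p, q in H1. fold h.
  assert (E : (2/3) ^ (S n) * (3/2) ^ (S n) = 1).
  { rewrite <- Rpow_mult_distr. replace (2/3 * (3/2)) with 1 by field. apply pow1. }
  assert (0 < (2/3) ^ (S n)) by (apply pow_lt; lra).
  nra.
Qed.

From Stdlib Require Import Reals Lra Lia Arith List FunctionalExtensionality Ring.
From Coquelicot Require Import Coquelicot.
Open Scope R_scope.

Lemma bb_pos n : 0 < bb n.
Proof.
  induction n; simpl; [lra|]. pose proof (pos_INR n).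
  apply Rmult_lt_0_compat; [apply Rmult_lt_0_compat; lra|]. apply Rinv_0_lt_compat; lra.
Qed.

Lemma bb_S n : bb (S n) = bb n * (2 * INR n + 1) / (2 * INR n + 2).
Proof. reflexivity. Qed.

Lemma bb_dec j d : bb (j + d) <= bb j.
Proof.
  induction d. { rewrite Nat.add_0_r; lra. }
  replace (j + S d)%nat with (S (j + d)) by lia. rewrite bb_S.
  pose proof (pos_INR (j + d)). pose proof (bb_pos (j + d)).
  apply Rle_trans with (bb (j + d)); auto.
  apply Rmult_le_reg_r with (2 * INR (j + d) + 2); [lra|].
  unfold Rdiv. rewrite Rmult_assoc, Rinv_l by lra. nra.
Qed.

Lemma bb_winc j d : INR (S j) * bb j <= INR (S (j + d)) * bb (j + d).
Proof.
  induction d. { rewrite Nat.add_0_r; lra. }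
  replace (j + S d)%nat with (S (j + d)) by lia.
  eapply Rle_trans; [exact IHd|]. rewrite bb_S.
  set (m := (j + d)%nat) in *. rewrite !S_INR.
  pose proof (pos_INR m). pose proof (bb_pos m).
  replace ((INR m + 1 + 1) * (bb m * (2 * INR m + 1) / (2 * INR m + 2)))
    with (bb m * ((INR m + 2) * (2 * INR m + 1) / (2 * INR m + 2))) by (field; lra).
  rewrite Rmult_comm. apply Rmult_le_compat_l; [lra|].
  apply Rmult_le_reg_r with (2 * INR m + 2); [lra|].
  unfold Rdiv. rewrite Rmult_assoc, Rinv_l by lra. nra.
Qed.

Lemma bb_diff n k : (k <= n)%nat ->
  Rabs (bb (n - k) - bb n) <= bb n * (INR k * INR (S k)) / INR (S n).
Proof.
  intros Hk.
  pose proof (bb_dec (n - k) k) as H1. replace (n - k + k)%nat with n in H1 by lia.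
  pose proof (bb_winc (n - k) k) as H2. replace (n - k + k)%nat with n in H2 by lia.
  pose proof (bb_pos n). pose proof (bb_pos (n - k)).
  rewrite Rabs_right by lra.
  assert (Hnat : (S n <= S k * S (n - k))%nat) by nia.
  apply le_INR in Hnat. rewrite mult_INR in Hnat.
  rewrite !S_INR in *. rewrite minus_INR in * by lia.
  pose proof (pos_INR k). pose proof (pos_INR n). assert (INR k <= INR n) by (apply le_INR; lia).
  apply Rmult_le_reg_r with (INR n + 1); [lra|].
  unfold Rdiv. rewrite Rmult_assoc, (Rmult_assoc (bb n)), Rinv_l by lra.
  nra.
Qed.

Lemma tele n : sum_f_R0 (fun k => INR k * INR (S k) * (2/3) ^ k) n +
  (3 * INR (S n) ^ 2 + 15 * INR (S n) + 36) * (2/3) ^ (S n) = 36.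
Proof.
  induction n.
  - simpl. field.
  - change (sum_f_R0 (fun k => INR k * INR (S k) * (2/3) ^ k) (S n)) with
      (sum_f_R0 (fun k => INR k * INR (S k) * (2/3) ^ k) n + INR (S n) * INR (S (S n)) * (2/3) ^ (S n)).
    assert (E : INR (S n) * INR (S (S n)) * (2/3) ^ (S n) +
      (3 * INR (S (S n)) ^ 2 + 15 * INR (S (S n)) + 36) * (2/3) ^ (S (S n)) =
      (3 * INR (S n) ^ 2 + 15 * INR (S n) + 36) * (2/3) ^ (S n)).
    { rewrite (S_INR (S n)). change ((2/3) ^ (S (S n))) with (2/3 * (2/3) ^ (S n)). field. }
    lra.
Qed.

Lemma kk_sum n : sum_f_R0 (fun k => INR k * INR (S k) * (2/3) ^ k) n <= 36.
Proof.
  pose proof (tele n). pose proof (pos_INR (S n)).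
  assert (0 < (2/3) ^ (S n)) by (apply pow_lt; lra).
  assert (0 <= (3 * INR (S n) ^ 2 + 15 * INR (S n) + 36)) by nra.
  nra.
Qed.

Lemma C0_nonneg n : 0 <= C0 n.
Proof. unfold C0, Wr. apply pos_INR. Qed.

Lemma A_mono n : Aser n <= Aser (S n).
Proof.
  destruct (Weq_coef _ _ (occ_eq 0)) as [H0 HS]. fold C0 in H0, HS.
  unfold Aser, stl. rewrite (HS (S n)).
  rewrite Xp_coef. simpl.
  assert (0 <= conv Lr C0 (S n)).
  { unfold conv. apply cond_pos_sum; intros k. apply Rmult_le_pos; [apply pos_INR|apply C0_nonneg]. }
  lra.
Qed.

Lemma A_ge1 n : 1 <= Aser n.
Proof.
  induction n. { unfold Aser, stl. rewrite C0_1. lra. }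
  pose proof (A_mono n). lra.
Qed.

Lemma u_pos rho n : 0 < rho -> 0 < rs rho Aser n.
Proof.
  intros H. unfold rs. apply Rmult_lt_0_compat; [apply pow_lt; auto|]. pose proof (A_ge1 n); lra.
Qed.

Lemma v_close rho : 0 < rho -> rho ^ 3 + rho ^ 2 + 3 * rho - 1 = 0 ->
  forall n, Rabs (rs rho Aser n / bb n - sum_f_R0 (Hser rho) n) <= 36 / INR (S n).
Proof.
  intros H0 Hc n.
  set (h := Hser rho).
  assert (Hu : rs rho Aser n = conv h bb n) by (rewrite u_HB; reflexivity).
  pose proof (bb_pos n) as Hb.
  assert (E : rs rho Aser n / bb n - sum_f_R0 h n =
              (sum_f_R0 (fun k => h k * (bb (n - k) - bb n)) n) / bb n).
  { assert (N : conv h bb n - bb n * sum_f_R0 h n = sum_f_R0 (fun k => h k * (bb (n - k) - bb n)) n).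
    { unfold conv. rewrite scal_sum, <- minus_sum. apply sum_eq; intros; ring. }
    rewrite Hu, <- N. field. lra. }
  rewrite E. unfold Rdiv. rewrite Rabs_mult, (Rabs_right (/ bb n)) by (apply Rle_ge, Rlt_le, Rinv_0_lt_compat; lra).
  apply Rmult_le_reg_r with (bb n); [lra|]. rewrite Rmult_assoc, Rinv_l, Rmult_1_r by lra.
  eapply Rle_trans; [apply rabs_sum_le|].
  apply Rle_trans with (sum_f_R0 (fun k => (INR k * INR (S k) * (2/3) ^ k) * (bb n / INR (S n))) n).
  - apply sum_Rle; intros k Hk. rewrite Rabs_mult.
    pose proof (H_bound rho H0 Hc k) as Hh. fold h in Hh.
    pose proof (bb_diff n k Hk) as Hd.
    pose proof (Rabs_pos (h k)). pose proof (Rabs_pos (bb (n - k) - bb n)).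
    apply Rle_trans with ((2/3) ^ k * (bb n * (INR k * INR (S k)) / INR (S n))).
    + apply Rmult_le_compat; auto.
    + right. field. apply not_0_INR; lia.
  - rewrite <- scal_sum. pose proof (kk_sum n).
    assert (0 < INR (S n)) by (apply lt_0_INR; lia).
    assert (0 <= bb n / INR (S n)) by (apply Rlt_le, Rdiv_lt_0_compat; lra).
    apply Rle_trans with (bb n / INR (S n) * 36); [apply Rmult_le_compat_l; auto|].
    right. field. lra.
Qed.

From Stdlib Require Import Reals Lra Lia Arith List FunctionalExtensionality Ring.
From Coquelicot Require Import Coquelicot.
Open Scope R_scope.

Lemma lim_partial (a : nat -> R) l : is_series a l -> is_lim_seq (fun n => sum_f_R0 a n) l.
Proof.
  intros H. apply (is_lim_seq_ext (sum_n a)). { intros n. apply sum_n_Reals. } exact H.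
Qed.

Lemma H_abs_series rho : 0 < rho -> rho ^ 3 + rho ^ 2 + 3 * rho - 1 = 0 ->
  ex_series (fun n => Rabs (Hser rho n)).
Proof.
  intros H0 Hc. apply (@ex_series_le R_AbsRing R_CompleteNormedModule _ (fun n => (2/3) ^ n)).
  - intros n. change (norm (Rabs (Hser rho n))) with (Rabs (Rabs (Hser rho n))).
    rewrite Rabs_Rabsolu. apply H_bound; auto.
  - apply ex_series_geom. rewrite Rabs_right; lra.
Qed.

Lemma inv_lim : is_lim_seq (fun n => 36 / INR (S n)) 0.
Proof.
  assert (H1 : is_lim_seq (fun n => INR (S n)) p_infty).
  { apply (is_lim_seq_incr_1 INR). apply is_lim_seq_INR. }
  apply is_lim_seq_inv in H1; [|discriminate].
  apply (is_lim_seq_scal_l _ 36) in H1. simpl in H1. rewrite Rmult_0_r in H1.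
  apply (is_lim_seq_ext _ _ _ (fun n => eq_refl) H1).
Qed.

Lemma v_lim rho : 0 < rho -> rho ^ 3 + rho ^ 2 + 3 * rho - 1 = 0 ->
  is_lim_seq (fun n => rs rho Aser n / bb n) (Series (Hser rho)).
Proof.
  intros H0 Hc.
  assert (Hs : is_lim_seq (fun n => sum_f_R0 (Hser rho) n) (Series (Hser rho))).
  { apply lim_partial, Series_correct, ex_series_Rabs, H_abs_series; auto. }
  apply (is_lim_seq_le_le (fun n => sum_f_R0 (Hser rho) n - 36 / INR (S n)) _
                          (fun n => sum_f_R0 (Hser rho) n + 36 / INR (S n))).
  - intros n. pose proof (v_close rho H0 Hc n) as H. apply Rabs_le_between in H. lra.
  - replace (Finite (Series (Hser rho))) with (Finite (Series (Hser rho) - 0)) by (f_equal; ring).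
    apply is_lim_seq_minus'; auto. apply inv_lim.
  - replace (Finite (Series (Hser rho))) with (Finite (Series (Hser rho) + 0)) by (f_equal; ring).
    apply is_lim_seq_plus'; auto. apply inv_lim.
Qed.

Lemma G_partial_rec rho : rho ^ 3 + rho ^ 2 + 3 * rho - 1 = 0 -> forall N,
  sum_f_R0 (Gser rho) (S (S N)) + (rho ^ 2 + rho ^ 3) * sum_f_R0 (Gser rho) (S N)
  + rho ^ 3 * sum_f_R0 (Gser rho) N = 1 - rho.
Proof.
  intros Hc. destruct (G_coefs rho Hc) as [G0 [G1 GS]]. rewrite G0 in G1.
  induction N.
  - change (sum_f_R0 (Gser rho) 2) with (Gser rho O + Gser rho 1%nat + Gser rho 2%nat).
    change (sum_f_R0 (Gser rho) 1) with (Gser rho O + Gser rho 1%nat).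
    change (sum_f_R0 (Gser rho) 0) with (Gser rho O).
    rewrite G0. specialize (GS O). nra.
  - assert (E1 : sum_f_R0 (Gser rho) (S (S (S N))) = sum_f_R0 (Gser rho) (S (S N)) + Gser rho (S (S (S N)))) by reflexivity.
    assert (E2 : sum_f_R0 (Gser rho) (S (S N)) = sum_f_R0 (Gser rho) (S N) + Gser rho (S (S N))) by reflexivity.
    assert (E3 : sum_f_R0 (Gser rho) (S N) = sum_f_R0 (Gser rho) N + Gser rho (S N)) by reflexivity.
    rewrite E1, E2, E3. rewrite E2, E3 in IHN.
    specialize (GS (S N)). lra.
Qed.

Lemma Sh_ne0 rho : 0 < rho -> rho ^ 3 + rho ^ 2 + 3 * rho - 1 = 0 -> Series (Hser rho) <> 0.
Proof.
  intros H0 Hc. set (Sh := Series (Hser rho)).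
  assert (Habs := H_abs_series rho H0 Hc).
  assert (Hser' : is_series (Hser rho) Sh) by (apply Series_correct, ex_series_Rabs; auto).
  assert (HG : is_lim_seq (fun N => sum_f_R0 (Gser rho) N) (Sh * Sh)).
  { apply lim_partial. exact (is_series_mult _ _ _ _ Hser' Hser' Habs Habs). }
  set (a := rho ^ 2 + rho ^ 3). set (b := rho ^ 3).
  assert (L1 : is_lim_seq (fun N => sum_f_R0 (Gser rho) (S (S N)) + a * sum_f_R0 (Gser rho) (S N)
                 + b * sum_f_R0 (Gser rho) N) (Sh * Sh + a * (Sh * Sh) + b * (Sh * Sh))).
  { apply is_lim_seq_plus'; [apply is_lim_seq_plus'|].
    - apply (is_lim_seq_incr_1 (fun N => sum_f_R0 (Gser rho) (S N))).
      apply (is_lim_seq_incr_1 (fun N => sum_f_R0 (Gser rho) N)). exact HG.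
    - apply (is_lim_seq_scal_l _ a (Sh * Sh)).
      apply (is_lim_seq_incr_1 (fun N => sum_f_R0 (Gser rho) N)). exact HG.
    - apply (is_lim_seq_scal_l _ b (Sh * Sh)). exact HG. }
  assert (L2 : is_lim_seq (fun N => sum_f_R0 (Gser rho) (S (S N)) + a * sum_f_R0 (Gser rho) (S N)
                 + b * sum_f_R0 (Gser rho) N) (1 - rho)).
  { apply (is_lim_seq_ext (fun _ => 1 - rho)). { intros N. symmetry. apply G_partial_rec; auto. }
    apply is_lim_seq_const. }
  apply is_lim_seq_unique in L1. apply is_lim_seq_unique in L2. rewrite L1 in L2.
  injection L2 as L2.
  destruct (rho_bounds rho H0 Hc).
  assert (0 <= a) by (unfold a; apply Rplus_le_le_0_compat; apply pow_le; lra).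
  assert (0 <= b) by (unfold b; apply pow_le; lra).
  intros E. rewrite E in L2. lra.
Qed.

From Stdlib Require Import Reals Lra Lia Arith List FunctionalExtensionality Ring.
From Coquelicot Require Import Coquelicot.
Open Scope R_scope.

Lemma contraction (r y : nat -> R) (rho : R) : 0 <= rho < 1 ->
  Un_cv r rho -> (forall N, y (S N) = 1 + r N * y N) -> Un_cv y (/ (1 - rho)).
Proof.
  intros Hr Hcv Hy eps Heps.
  set (l := / (1 - rho)). assert (Hl : 0 < l) by (apply Rinv_0_lt_compat; lra).
  assert (Hl1 : l * (1 - rho) = 1) by (unfold l; field; lra).
  set (q := (1 + rho) / 2).
  set (d := Rmin ((1 - rho) / 2) (eps * (1 - q) / (2 * l))).
  assert (Hd : 0 < d).
  { unfold d, q. apply Rmin_pos; [lra|]. apply Rdiv_lt_0_compat; [|lra]. apply Rmult_lt_0_compat; lra. }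
  destruct (Hcv d Hd) as [N0 HN0].
  assert (step : forall N, (N >= N0)%nat -> Rabs (y (S N) - l) <= q * Rabs (y N - l) + eps * (1 - q) / 2).
  { intros N HN. specialize (HN0 N HN). unfold R_dist in HN0.
    assert (E : y (S N) - l = r N * (y N - l) + (r N - rho) * l).
    { rewrite Hy. replace 1 with (l * (1 - rho)) at 1 by exact Hl1. ring. }
    rewrite E. eapply Rle_trans; [apply Rabs_triang|]. rewrite !Rabs_mult, (Rabs_right l) by lra.
    assert (d <= (1 - rho) / 2) by apply Rmin_l.
    assert (d <= eps * (1 - q) / (2 * l)) by apply Rmin_r.
    assert (Rabs (r N) <= q).
    { unfold q. apply Rabs_def2 in HN0 as [? ?]. apply Rabs_le. lra. }
    assert (Rabs (r N - rho) * l <= eps * (1 - q) / 2).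
    { apply Rle_trans with (d * l); [apply Rmult_le_compat_r; lra|].
      apply Rle_trans with (eps * (1 - q) / (2 * l) * l); [apply Rmult_le_compat_r; lra|].
      right. field. lra. }
    pose proof (Rabs_pos (y N - l)). pose proof (Rabs_pos (r N)). nra. }
  assert (iter : forall k, Rabs (y (N0 + k)%nat - l) <= q ^ k * Rabs (y N0 - l) + eps / 2).
  { induction k.
    - rewrite Nat.add_0_r. simpl. pose proof (Rabs_pos (y N0 - l)). lra.
    - replace (N0 + S k)%nat with (S (N0 + k)) by lia.
      eapply Rle_trans; [apply step; lia|]. simpl pow.
      assert (0 < q) by (unfold q; lra).
      assert (1 - q > 0) by (unfold q; lra).
      nra. }
  set (z := Rabs (y N0 - l)).
  assert (Hq : Rabs q < 1) by (unfold q; rewrite Rabs_right; lra).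
  destruct (pow_lt_1_zero q Hq (eps / 2 / (z + 1))) as [K HK].
  { apply Rdiv_lt_0_compat; [lra|]. unfold z; pose proof (Rabs_pos (y N0 - l)); lra. }
  exists (N0 + K)%nat. intros n Hn. unfold R_dist.
  replace n with (N0 + (n - N0))%nat by lia.
  eapply Rle_lt_trans; [apply iter|]. fold z.
  specialize (HK (n - N0)%nat ltac:(lia)).
  assert (0 <= q ^ (n - N0)) by (apply pow_le; unfold q; lra).
  rewrite Rabs_right in HK by lra.
  assert (0 <= z) by (unfold z; apply Rabs_pos).
  assert (q ^ (n - N0) * (z + 1) < eps / 2).
  { apply Rmult_lt_reg_r with (/ (z + 1)); [apply Rinv_0_lt_compat; lra|].
    rewrite Rmult_assoc, Rinv_r, Rmult_1_r by lra. exact HK. }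
  nra.
Qed.

From Stdlib Require Import Reals Lra Lia Arith List FunctionalExtensionality Ring.
From Coquelicot Require Import Coquelicot.
Open Scope R_scope.

Lemma bb_ratio_lim : is_lim_seq (fun n => bb n / bb (S n)) 1.
Proof.
  apply (is_lim_seq_le_le (fun _ => 1) _ (fun n => 1 + 36 / INR (S n))).
  - intros n. pose proof (bb_pos n). pose proof (pos_INR n).
    assert (E : bb n / bb (S n) = 1 + 1 / (2 * INR n + 1)).
    { rewrite bb_S. field. split; lra. }
    rewrite E. assert (0 < 1 / (2 * INR n + 1)) by (apply Rdiv_lt_0_compat; lra).
    split; [lra|]. apply Rplus_le_compat_l. rewrite S_INR.
    unfold Rdiv. rewrite !Rmult_1_l.
    apply Rle_trans with (/ (INR n + 1)).
    + apply Rinv_le_contravar; lra.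
    + assert (0 < / (INR n + 1)) by (apply Rinv_0_lt_compat; lra). lra.
  - apply is_lim_seq_const.
  - replace (Finite 1) with (Finite (1 + 0)) by (f_equal; ring).
    apply is_lim_seq_plus'; [apply is_lim_seq_const | apply inv_lim].
Qed.

Lemma ratio_lim rho : 0 < rho -> rho ^ 3 + rho ^ 2 + 3 * rho - 1 = 0 ->
  is_lim_seq (fun n => Aser n / Aser (S n)) rho.
Proof.
  intros H0 Hc.
  set (v := fun n => rs rho Aser n / bb n).
  assert (Hv : is_lim_seq v (Series (Hser rho))) by (apply v_lim; auto).
  assert (Hv1 : is_lim_seq (fun n => v (S n)) (Series (Hser rho))) by (apply (is_lim_seq_incr_1 v); exact Hv).
  pose proof (Sh_ne0 rho H0 Hc) as Hne.
  assert (L : is_lim_seq (fun n => rho * (v n / v (S n)) * (bb n / bb (S n)))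
                (rho * (Series (Hser rho) / Series (Hser rho)) * 1)).
  { apply is_lim_seq_mult'; [|apply bb_ratio_lim].
    apply (is_lim_seq_scal_l _ rho (Series (Hser rho) / Series (Hser rho))).
    apply is_lim_seq_div'; auto. }
  replace (rho * (Series (Hser rho) / Series (Hser rho)) * 1) with rho in L by (field; auto).
  apply (is_lim_seq_ext _ _ _ ltac:(intros n; reflexivity)) in L.
  eapply is_lim_seq_ext; [|exact L]. intros n. cbv beta.
  unfold v, rs. pose proof (bb_pos n). pose proof (bb_pos (S n)).
  pose proof (A_ge1 n). pose proof (A_ge1 (S n)).
  assert (0 < rho ^ n) by (apply pow_lt; auto).
  change (rho ^ S n) with (rho * rho ^ n).
  set (t := rho ^ n) in *. set (b0 := bb n) in *. set (b1 := bb (S n)) in *.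
  set (a0 := Aser n) in *. set (a1 := Aser (S n)) in *.
  field. repeat split; lra.
Qed.

Lemma ratio_pow rho : 0 < rho -> rho ^ 3 + rho ^ 2 + 3 * rho - 1 = 0 ->
  forall m, is_lim_seq (fun n => Aser n / Aser (n + m)%nat) (rho ^ m).
Proof.
  intros H0 Hc. induction m.
  - simpl. apply (is_lim_seq_ext (fun _ => 1)); [|apply is_lim_seq_const].
    intros n. rewrite Nat.add_0_r. pose proof (A_ge1 n). field. lra.
  - assert (Hr : is_lim_seq (fun n => Aser (n + m)%nat / Aser (S (n + m))) rho).
    { apply (is_lim_seq_incr_n (fun n => Aser n / Aser (S n)) m). apply ratio_lim; auto. }
    pose proof (is_lim_seq_mult' _ _ _ _ IHm Hr) as L.
    eapply is_lim_seq_ext; [|simpl; rewrite Rmult_comm; exact L].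
    intros n. simpl. replace (n + S m)%nat with (S (n + m)) by lia.
    pose proof (A_ge1 n). pose proof (A_ge1 (n + m)). pose proof (A_ge1 (S (n + m))).
    field. split; lra.
Qed.

Lemma sumA_pos n : 0 < sum_f_R0 Aser n.
Proof.
  induction n.
  - simpl. pose proof (A_ge1 O). lra.
  - simpl. pose proof (A_ge1 (S n)). lra.
Qed.

Lemma frac_lim rho : 0 < rho -> rho ^ 3 + rho ^ 2 + 3 * rho - 1 = 0 ->
  is_lim_seq (fun n => Aser n / sum_f_R0 Aser n) (1 - rho).
Proof.
  intros H0 Hc. destruct (rho_bounds rho H0 Hc).
  assert (Hy : Un_cv (fun n => sum_f_R0 Aser n / Aser n) (/ (1 - rho))).
  { apply (contraction (fun n => Aser n / Aser (S n))); [lra| |].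
    - apply is_lim_seq_Reals, ratio_lim; auto.
    - intros N. simpl. pose proof (A_ge1 N). pose proof (A_ge1 (S N)). field. split; lra. }
  apply is_lim_seq_Reals in Hy.
  pose proof (is_lim_seq_div' _ _ _ _ (is_lim_seq_const 1) Hy) as L.
  assert (Hne : / (1 - rho) <> 0) by (apply Rinv_neq_0_compat; lra).
  specialize (L Hne).
  replace (1 / / (1 - rho)) with (1 - rho) in L by (field; lra).
  eapply is_lim_seq_ext; [|exact L]. intros n. simpl.
  pose proof (A_ge1 n). pose proof (sumA_pos n). field. split; lra.
Qed.

Lemma Xp_shift m F k : conv (Xp m) F (k + m)%nat = F k.
Proof.
  induction m.
  - rewrite Nat.add_0_r. simpl Xp. rewrite conv_1_l. reflexivity.
  - simpl Xp. rewrite <- conv_assoc. replace (k + S m)%nat with (S (k + m)) by lia.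
    rewrite cXS. exact IHm.
Qed.

Lemma probX_eq m n : probX (n + S m)%nat m = Aser n / sum_f_R0 Aser (n + m)%nat.
Proof.
  change (probX (n + S m)%nat m) with (Wr (occ m) (n + S m)%nat / Wr nvars (n + S m)%nat).
  rewrite Cm_eq, V_eq. replace (n + S m)%nat with (S n + m)%nat by lia.
  rewrite Xp_shift. rewrite conv_Ur_sum. replace (S n + m)%nat with (S (n + m)) by lia.
  rewrite decomp_sum by lia. rewrite C0_0, Rplus_0_l. reflexivity.
Qed.

Theorem mainTheorem5 :
  forall rho : R, 0 < rho -> rho ^ 3 + rho ^ 2 + 3 * rho - 1 = 0 ->
  forall m : nat, Un_cv (fun n => probX n m) ((1 - rho) * rho ^ m).
Proof.
  intros rho H0 Hc m. apply is_lim_seq_Reals.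
  apply (is_lim_seq_incr_n _ (S m)).
  assert (L1 := ratio_pow rho H0 Hc m).
  assert (L2 : is_lim_seq (fun n => Aser (n + m)%nat / sum_f_R0 Aser (n + m)%nat) (1 - rho)).
  { apply (is_lim_seq_incr_n (fun n => Aser n / sum_f_R0 Aser n) m). apply frac_lim; auto. }
  pose proof (is_lim_seq_mult' _ _ _ _ L1 L2) as L.
  eapply is_lim_seq_ext; [|rewrite Rmult_comm; exact L].
  intros n. simpl. rewrite probX_eq.
  pose proof (A_ge1 (n + m)). field. pose proof (sumA_pos (n + m)). split; lra.
Qed.
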